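(* Let $a,c,p\in\mathbb{C}$ with $-c\notin\mathbb{N}\cup\{0\}$ and $c\neq2$. Write $\sin(pz)M(a,c;z)=\sum_{n=0}^\infty u_nz^n$, $z\in\mathbb{C}$. Then $u_0=0$, $u_1=p$, $u_2=\frac{ap}{c}$, $u_3=\frac{a(a+1)p}{2c(c+1)}-\frac{p^3}{6}$, $u_4=\frac{a(a+1)(a+2)p}{6c(c+1)(c+2)}-\frac{ap^3}{6c}$, $u_5=-\frac{a(a+1)p^3}{12c(c+1)}+\frac{a(a+1)(a+2)(a+3)p}{24c(c+1)(c+2)(c+3)}+\frac{p^5}{120}$, and for all integers $n\ge5$, \[ u_{n+1}=\sum_{i=0}^5\beta_i(n)u_{n-i}, \] where, with $D(n)=(c-2)c\,n(n+1)(c+n-1)(c+n)$, \[ \beta_0(n)=\frac{2\left(a\left(c^2-2cn+c-2(n-2)^2\right)+c(n-1)(2c+n-5)\right)}{(c-2)c(n+1)(c+n)}, \] \[ \beta_1(n)=\frac{1}{D(n)}\Big[-(n-4)(n-3)(n-2)(n-1)(4p^2+1)+2(n-3)(n-2)(n-1)\big(4a-c(4p^2+3)\big) +(n-2)(n-1)\big(8a^2+a(4c+6)-6c((c-2)p^2+c)+c\big) +2(n-1)\big(a^2(4c-2)-3a(c-1)c+c(-c^2+c+2)p^2\big) -(c-2)\big(a^2(c+2)-ac+c^2(c+1)p^2\big)\Big], \] \[ \beta_2(n)=\frac{1}{D(n)}\Big[-2p^2(c-3)\big(a(3c+8)-2c^2+c-32\big)+2p^2\big(n(-10a+c(3c-31)+104)+6(c-6)n^2+4n^3\big)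 -2(a+n-3)\big(2a^2-a(c-2n+3)-(n-2)(2c+n-4)\big)\Big], \] \[ \beta_3(n)=-\frac{1}{D(n)}\Big[p^2\big(12a^2-2a(6c+5)+c(6c-1)\big)+2(n-3)\big(a+c(4p^2+3)p^2\big) +(a-1)a+5(c-2)cp^4+(n-4)(n-3)(8p^4+6p^2+1)\Big], \] \[ \beta_4(n)=\frac{2p^2\left(p^2(-6a+5c+4(n-4))-3a+2c+n-4\right)}{D(n)},\qquad \beta_5(n)=-\frac{p^2(4p^4+5p^2+1)}{D(n)}. \]
   Context: For $a\in\mathbb{C}$, $(a)_n=a(a+1)\cdots(a+n-1)$ denotes the Pochhammer symbol, with $(a)_0=1$. For $a,c\in\mathbb{C}$ with $-c\notin\mathbb{N}\cup\{0\}$, the confluent hypergeometric (Kummer) function is $M(a,c;z)=\sum_{n=0}^\infty \frac{(a)_n}{(c)_n\,n!}z^n$, $z\in\mathbb{C}$. *)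

(* Defs.v *)
From mathcomp Require Import all_boot all_order all_algebra.
From mathcomp Require Import complex.
From mathcomp Require Import reals.
Set Implicit Arguments. Unset Strict Implicit. Unset Printing Implicit Defensive.
Import Order.TTheory GRing.Theory Num.Theory.
Local Open Scope ring_scope.

Section Defs.
Variable C : fieldType.

Definition poch (a : C) (n : nat) : C := \prod_(i < n) (a + i%:R).

(* n-th Maclaurin coefficient of the Kummer function M(a,c;z) *)
Definition kummer_coef (a c : C) (n : nat) : C :=
  poch a n / (poch c n * (n`!)%:R).

Definition sin_coef (p : C) (k : nat) : C :=
  if odd k then (-1) ^+ k./2 * p ^+ k / (k`!)%:R else 0.

Definition u_coef (a c p : C) (n : nat) : C :=
  \sum_(k < n.+1) sin_coef p k * kummer_coef a c (n - k).

Definition Dn (c : C) (n : nat) : C :=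
  let N := n%:R in (c - 2) * c * N * (N + 1) * (c + N - 1) * (c + N).

Definition beta0 (a c : C) (n : nat) : C :=
  let N := n%:R in
  2 * (a * (c ^+ 2 - 2 * c * N + c - 2 * (N - 2) ^+ 2) + c * (N - 1) * (2 * c + N - 5))
  / ((c - 2) * c * (N + 1) * (c + N)).

Definition beta1 (a c p : C) (n : nat) : C :=
  let N := n%:R in
  (- (N - 4) * (N - 3) * (N - 2) * (N - 1) * (4 * p ^+ 2 + 1)
   + 2 * (N - 3) * (N - 2) * (N - 1) * (4 * a - c * (4 * p ^+ 2 + 3))
   + (N - 2) * (N - 1) * (8 * a ^+ 2 + a * (4 * c + 6) - 6 * c * ((c - 2) * p ^+ 2 + c) + c)
   + 2 * (N - 1) * (a ^+ 2 * (4 * c - 2) - 3 * a * (c - 1) * c + c * (- c ^+ 2 + c + 2) * p ^+ 2)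
   - (c - 2) * (a ^+ 2 * (c + 2) - a * c + c ^+ 2 * (c + 1) * p ^+ 2))
  / Dn c n.

Definition beta2 (a c p : C) (n : nat) : C :=
  let N := n%:R in
  (- 2 * p ^+ 2 * (c - 3) * (a * (3 * c + 8) - 2 * c ^+ 2 + c - 32)
   + 2 * p ^+ 2 * (N * (- 10 * a + c * (3 * c - 31) + 104) + 6 * (c - 6) * N ^+ 2 + 4 * N ^+ 3)
   - 2 * (a + N - 3) * (2 * a ^+ 2 - a * (c - 2 * N + 3) - (N - 2) * (2 * c + N - 4)))
  / Dn c n.

Definition beta3 (a c p : C) (n : nat) : C :=
  let N := n%:R in
  - ((p ^+ 2 * (12 * a ^+ 2 - 2 * a * (6 * c + 5) + c * (6 * c - 1))
      + 2 * (N - 3) * (a + c * (4 * p ^+ 2 + 3) * p ^+ 2)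
      + (a - 1) * a + 5 * (c - 2) * c * p ^+ 4
      + (N - 4) * (N - 3) * (8 * p ^+ 4 + 6 * p ^+ 2 + 1))
     / Dn c n).

Definition beta4 (a c p : C) (n : nat) : C :=
  let N := n%:R in
  2 * p ^+ 2 * (p ^+ 2 * (- 6 * a + 5 * c + 4 * (N - 4)) - 3 * a + 2 * c + N - 4) / Dn c n.

Definition beta5 (c p : C) (n : nat) : C :=
  - (p ^+ 2 * (4 * p ^+ 4 + 5 * p ^+ 2 + 1) / Dn c n).

End Defs.

(* Main.v *)
Require Import Defs.
From mathcomp Require Import all_boot all_order all_algebra.
From mathcomp Require Import complex.
From mathcomp Require Import reals.
From mathcomp Require Import ring.
Import Order.TTheory GRing.Theory Num.Theory.
Local Open Scope ring_scope.

Section Gen.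
Context {F : numFieldType}.
Implicit Types f g h : nat -> F.

Definition conv f g (n : nat) : F := \sum_(k < n.+1) f k * g (n - k)%N.
Definition th f (k : nat) : F := k%:R * f k.
Definition sh f (k : nat) : F := if k is j.+1 then f j else 0.

Lemma conv_th f g n : n%:R * conv f g n = conv (th f) g n + conv f (th g) n.
Proof.
rewrite /conv mulr_sumr -big_split /=; apply: eq_bigr => [[k hk]] _ /=.
have hk' : (k <= n)%N by [].
rewrite /th -{1}(subnKC hk') natrD; ring.
Qed.

Lemma conv_shl f g n : conv (sh f) g n.+1 = conv f g n.
Proof.
rewrite /conv big_ord_recl /= mul0r add0r; apply: eq_bigr => i _ /=.
by rewrite subSS.
Qed.

Lemma conv_shr f g n : conv f (sh g) n.+1 = conv f g n.
Proof.
rewrite /conv big_ord_recr /= subnn mulr0 addr0; apply: eq_bigr => [[i hi]] _ /=.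
by rewrite subSn.
Qed.

Lemma conv_extl f f' g n : f =1 f' -> conv f g n = conv f' g n.
Proof. by move=> e; apply: eq_bigr => i _; rewrite e. Qed.

Lemma conv_extr f g g' n : g =1 g' -> conv f g n = conv f g' n.
Proof. by move=> e; apply: eq_bigr => i _; rewrite e. Qed.

Lemma conv_linr f g h (x y : F) n :
  conv f (fun j => x * g j + y * h j) n = x * conv f g n + y * conv f h n.
Proof. rewrite /conv !mulr_sumr -big_split; apply: eq_bigr => i _ /=; ring. Qed.

Lemma conv_scalel f g (x : F) n : conv (fun j => x * f j) g n = x * conv f g n.
Proof. rewrite /conv !mulr_sumr; apply: eq_bigr => i _ /=; ring. Qed.

Lemma lc5 (c1 c2 c3 c4 c5 : F) {x1 y1 x2 y2 x3 y3 x4 y4 x5 y5 l r : F} :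
  x1 = y1 -> x2 = y2 -> x3 = y3 -> x4 = y4 -> x5 = y5 ->
  l - r = c1 * (x1 - y1) + c2 * (x2 - y2) + c3 * (x3 - y3) + c4 * (x4 - y4)
          + c5 * (x5 - y5) -> l = r.
Proof.
move=> -> -> -> -> -> /eqP; rewrite !subrr !mulr0 !addr0 subr_eq0 => /eqP //.
Qed.

Lemma lc9 (c1 c2 c3 c4 c5 c6 c7 c8 c9 : F) {x1 y1 x2 y2 x3 y3 x4 y4 x5 y5
  x6 y6 x7 y7 x8 y8 x9 y9 l r : F} :
  x1 = y1 -> x2 = y2 -> x3 = y3 -> x4 = y4 -> x5 = y5 ->
  x6 = y6 -> x7 = y7 -> x8 = y8 -> x9 = y9 ->
  l - r = c1 * (x1 - y1) + c2 * (x2 - y2) + c3 * (x3 - y3) + c4 * (x4 - y4)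
          + c5 * (x5 - y5) + c6 * (x6 - y6) + c7 * (x7 - y7) + c8 * (x8 - y8)
          + c9 * (x9 - y9) -> l = r.
Proof.
move=> -> -> -> -> -> -> -> -> -> /eqP.
by rewrite !subrr !mulr0 !addr0 subr_eq0 => /eqP.
Qed.

Lemma key (a c p : F) f g m
  (hf : forall k, k.+1%:R * f k.+1 = p * g k)
  (hg : forall k, k.+1%:R * g k.+1 = - p * f k)
  (hm : forall k, k.+1%:R * (k%:R + c) * m k.+1 = (k%:R + a) * m k) k :
  (k.+2)%:R * (k.+1%:R + c) * conv f m k.+2
  = p * (2 * k.+1%:R + c) * conv g m k.+1 + p ^+ 2 * conv f m k
    + (k.+1%:R + a) * conv f m k.+1 - p * conv g m k.
Proof.
set U := conv f m; set W := conv g m.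
set T := conv f (th m); set V := conv g (th m); set T2 := conv f (th (th m)).
have thf : th f =1 (fun j => p * sh g j).
  by case=> [|j]; rewrite /th /= ?mul0r ?mulr0 // hf.
have thg : th g =1 (fun j => - p * sh f j).
  by case=> [|j]; rewrite /th /= ?mul0r ?mulr0 // hg.
have A j : j.+1%:R * U j.+1 = p * W j + T j.+1.
  by rewrite /U conv_th (conv_extl _ _ _ _ thf) conv_scalel conv_shl.
have B j : j.+1%:R * W j.+1 = - p * U j + V j.+1.
  by rewrite /W conv_th (conv_extl _ _ _ _ thg) conv_scalel conv_shl.
have C j : j.+1%:R * T j.+1 = p * V j + T2 j.+1.
  by rewrite /T conv_th (conv_extl _ _ _ _ thf) conv_scalel conv_shl.
have D j : T2 j.+1 + (c - 1) * T j.+1 = T j + a * U j.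
  have e : (fun i => 1 * th (th m) i + (c - 1) * th m i)
           =1 sh (fun i => 1 * th m i + a * m i).
    case=> [|i] /=; rewrite /th; first ring.
    have := hm i; move=> h.
    apply: (lc5 1 0 0 0 0 h h h h h); ring.
  have := conv_extr f _ _ j.+1 e.
  by rewrite conv_linr conv_shr conv_linr !mul1r.
apply: (lc5 (k.+1%:R + c) 1 1 (- p) (-1) (A k.+1) (C k.+1) (D k.+1) (B k) (A k)).
ring.
Qed.

Lemma conv_oppl f g n : conv (fun j => - f j) g n = - conv f g n.
Proof. rewrite /conv -sumrN; apply: eq_bigr => i _ /=; ring. Qed.

Definition cos_coef (p : F) (k : nat) : F :=
  if odd k then 0 else (-1) ^+ k./2 * p ^+ k / (k`!)%:R.

Lemma fact_neq0 k : (k`!)%:R != 0 :> F.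
Proof. by rewrite pnatr_eq0 -lt0n fact_gt0. Qed.

Lemma natS_neq0 k : (k.+1)%:R != 0 :> F.
Proof. by rewrite pnatr_eq0. Qed.

Lemma onek_neq0 k : 1 + k%:R != 0 :> F.
Proof. by have := natS_neq0 k; rewrite -addn1 natrD addrC. Qed.

Lemma sin_rec (p : F) k : k.+1%:R * sin_coef p k.+1 = p * cos_coef p k.
Proof.
rewrite /sin_coef /cos_coef /=; case ok: (odd k) => /=; first by rewrite !mulr0.
rewrite uphalf_half ok add0n factS natrM exprS.
have := fact_neq0 k; have := natS_neq0 k => h1 h2.
field.
by rewrite h2 onek_neq0.
Qed.

Lemma cos_rec (p : F) k : k.+1%:R * cos_coef p k.+1 = - p * sin_coef p k.
Proof.
rewrite /sin_coef /cos_coef /=; case ok: (odd k) => /=; last by rewrite !mulr0.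
rewrite uphalf_half ok add1n factS natrM !exprS.
have := fact_neq0 k; have := natS_neq0 k => h1 h2.
field.
by rewrite h2 onek_neq0.
Qed.

Lemma poch_S (x : F) n : poch x n.+1 = poch x n * (x + n%:R).
Proof. by rewrite /poch big_ord_recr. Qed.

Lemma poch_neq0 (x : F) n : (forall j, x + j%:R != 0) -> poch x n != 0.
Proof.
move=> hx; elim: n => [|n IH]; first by rewrite /poch big_ord0 oner_neq0.
by rewrite poch_S mulf_neq0.
Qed.

Lemma kum_rec (a c : F) (hc : forall j, c + j%:R != 0) k :
  k.+1%:R * (k%:R + c) * kummer_coef a c k.+1 = (k%:R + a) * kummer_coef a c k.
Proof.
rewrite /kummer_coef !poch_S factS natrM.
have := poch_neq0 c k hc; have := hc k; have := fact_neq0 k => h1 h2 h3.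
field.
by rewrite h1 h2 h3 onek_neq0.
Qed.

End Gen.

Local Open Scope complex_scope.

Theorem theorem2p7 (R : realType) (a c p : R[i])
  (hc : forall k : nat, c != - (k%:R))
  (hc2 : c != 2) :
  let u := u_coef a c p in
  u 0%N = 0 /\
      u 1%N = p /\
      u 2%N = a * p / c /\
      u 3%N = a * (a + 1) * p / (2 * c * (c + 1)) - p ^+ 3 / 6 /\
      u 4%N = a * (a + 1) * (a + 2) * p / (6 * c * (c + 1) * (c + 2))
              - a * p ^+ 3 / (6 * c) /\
      u 5%N = - (a * (a + 1) * p ^+ 3 / (12 * c * (c + 1)))
              + a * (a + 1) * (a + 2) * (a + 3) * p
                / (24 * c * (c + 1) * (c + 2) * (c + 3))
              + p ^+ 5 / 120 /\
    forall n : nat, (5 <= n)%N ->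
      u n.+1 = beta0 a c n * u n + beta1 a c p n * u (n - 1)%N
               + beta2 a c p n * u (n - 2)%N + beta3 a c p n * u (n - 3)%N
               + beta4 a c p n * u (n - 4)%N + beta5 c p n * u (n - 5)%N.
Proof.
have cnz : forall j : nat, c + j%:R != 0 by move=> j; rewrite addr_eq0.
have c0 : c != 0 by have := cnz 0%N; rewrite addr0.
have c1 : c + 1 != 0 by exact: (cnz 1%N).
have c2 : c + 2 != 0 by exact: (cnz 2%N).
have c3 : c + 3 != 0 by exact: (cnz 3%N).
have c4 : c + 4 != 0 by exact: (cnz 4%N).
have c2' : c - 2 != 0 by rewrite subr_eq0.
set U := conv (sin_coef p) (kummer_coef a c).
set W := conv (cos_coef p) (kummer_coef a c).
have uE : u_coef a c p = U by [].
move=> u; rewrite /u uE.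
have ev : forall P : Prop, P -> P by [].
split.
  rewrite /U /conv big_ord1 /sin_coef /=; ring.
do 5 (split; first (rewrite /U /conv !big_ord_recr big_ord0 /= /sin_coef /kummer_coef /poch /=;
  rewrite !big_ord_recr !big_ord0 /= ?subSS ?subn0 ?subnn ?factS ?fact0; field;
  rewrite ?c0 ?c1 ?c2 ?c3 ?c4 ?pnatr_eq0 //)).
move=> n hn.
have [k ->] : exists k, n = k.+4.+1 by case: n hn => [|[|[|[|[|k]]]]] // _; exists k.
rewrite !subSS !subn0.
have hk := kum_rec a c cnz.
have E1 j : (j.+2)%:R * (j.+1%:R + c) * U j.+2
  = p * (2 * j.+1%:R + c) * W j.+1 + p ^+ 2 * U j
    + (j.+1%:R + a) * U j.+1 - p * W j.
  exact: (key a c p _ _ _ (sin_rec p) (cos_rec p) hk j).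
have hco' : forall k, k.+1%:R * cos_coef p k.+1 = p * (fun j => - sin_coef p j) k.
  by move=> j; rewrite cos_rec mulrN mulNr.
have hs' : forall k, k.+1%:R * (fun j => - sin_coef p j) k.+1 = - p * cos_coef p k.
  by move=> j /=; rewrite mulrN sin_rec mulNr.
have E2 j : (j.+2)%:R * (j.+1%:R + c) * W j.+2
  = p * (2 * j.+1%:R + c) * (- U j.+1) + p ^+ 2 * W j
    + (j.+1%:R + a) * W j.+1 - p * (- U j).
  by have := key a c p _ _ _ hco' hs' hk j; rewrite !conv_oppl.
  have key : Dn c (k.+4.+1) * U k.+4.+2 =
    (2 * (a * (c ^+ 2 - 2 * c * (k.+4.+1)%:R + c - 2 * ((k.+4.+1)%:R - 2) ^+ 2) + c * ((k.+4.+1)%:R - 1) * (2 * c + (k.+4.+1)%:R - 5)) * (k.+4.+1)%:R * (c + (k.+4.+1)%:R - 1)) * U k.+4.+1 +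
    ((- ((k.+4.+1)%:R - 4) * ((k.+4.+1)%:R - 3) * ((k.+4.+1)%:R - 2) * ((k.+4.+1)%:R - 1) * (4 * p ^+ 2 + 1)
   + 2 * ((k.+4.+1)%:R - 3) * ((k.+4.+1)%:R - 2) * ((k.+4.+1)%:R - 1) * (4 * a - c * (4 * p ^+ 2 + 3))
   + ((k.+4.+1)%:R - 2) * ((k.+4.+1)%:R - 1) * (8 * a ^+ 2 + a * (4 * c + 6) - 6 * c * ((c - 2) * p ^+ 2 + c) + c)
   + 2 * ((k.+4.+1)%:R - 1) * (a ^+ 2 * (4 * c - 2) - 3 * a * (c - 1) * c + c * (- c ^+ 2 + c + 2) * p ^+ 2)
   - (c - 2) * (a ^+ 2 * (c + 2) - a * c + c ^+ 2 * (c + 1) * p ^+ 2))) * U k.+4 +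
    ((- 2 * p ^+ 2 * (c - 3) * (a * (3 * c + 8) - 2 * c ^+ 2 + c - 32)
   + 2 * p ^+ 2 * ((k.+4.+1)%:R * (- 10 * a + c * (3 * c - 31) + 104) + 6 * (c - 6) * (k.+4.+1)%:R ^+ 2 + 4 * (k.+4.+1)%:R ^+ 3)
   - 2 * (a + (k.+4.+1)%:R - 3) * (2 * a ^+ 2 - a * (c - 2 * (k.+4.+1)%:R + 3) - ((k.+4.+1)%:R - 2) * (2 * c + (k.+4.+1)%:R - 4)))) * U k.+3 +
    ((- (p ^+ 2 * (12 * a ^+ 2 - 2 * a * (6 * c + 5) + c * (6 * c - 1))
      + 2 * ((k.+4.+1)%:R - 3) * (a + c * (4 * p ^+ 2 + 3) * p ^+ 2)
      + (a - 1) * a + 5 * (c - 2) * c * p ^+ 4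
      + ((k.+4.+1)%:R - 4) * ((k.+4.+1)%:R - 3) * (8 * p ^+ 4 + 6 * p ^+ 2 + 1)))) * U k.+2 +
    ((2 * p ^+ 2 * (p ^+ 2 * (- 6 * a + 5 * c + 4 * ((k.+4.+1)%:R - 4)) - 3 * a + 2 * c + (k.+4.+1)%:R - 4))) * U k.+1 +
    ((- (p ^+ 2 * (4 * p ^+ 4 + 5 * p ^+ 2 + 1)))) * U k.
    apply: (lc9 (c ^+ 3 * (k.+4.+1)%:R + c ^+ 2 * (k.+4.+1)%:R ^+ 2 - 3 * c ^+ 2 * (k.+4.+1)%:R - 2 * c * (k.+4.+1)%:R ^+ 2 + 2 * c * (k.+4.+1)%:R) (- a * c ^+ 2 + 4 * a * c * (k.+4.+1)%:R - 4 * a * c + 4 * a * (k.+4.+1)%:R ^+ 2 - 16 * a * (k.+4.+1)%:R + 16 * a - 3 * c ^+ 2 * (k.+4.+1)%:R + 4 * c ^+ 2 - 2 * c * (k.+4.+1)%:R ^+ 2 + 10 * c * (k.+4.+1)%:R - 10 * c) (- 4 * a ^+ 2 + 2 * a * c - 4 * a * (k.+4.+1)%:R + 10 * a - c ^+ 2 * p ^+ 2 + 4 * c * p ^+ 2 * (k.+4.+1)%:R - 10 * c * p ^+ 2 + 3 * c * (k.+4.+1)%:R - 8 * c + 4 * p ^+ 2 * (k.+4.+1)%:R ^+ 2 - 28 * p ^+ 2 * (k.+4.+1)%:R + 48 * p ^+ 2 + (k.+4.+1)%:R ^+ 2 - 7 * (k.+4.+1)%:R + 12) (- 8 * a * p ^+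 2 - a + 2 * c * p ^+ 2 - 4 * p ^+ 2 * (k.+4.+1)%:R + 16 * p ^+ 2 - (k.+4.+1)%:R + 4) (- 4 * p ^+ 4 - p ^+ 2)
                (c ^+ 3 * p + 2 * c ^+ 2 * p * (k.+4.+1)%:R - 2 * c ^+ 2 * p - 4 * c * p * (k.+4.+1)%:R) (4 * a * c * p + 8 * a * p * (k.+4.+1)%:R - 16 * a * p - 3 * c ^+ 2 * p - 4 * c * p * (k.+4.+1)%:R + 10 * c * p) (- 4 * a * p + 4 * c * p ^+ 3 + 3 * c * p + 8 * p ^+ 3 * (k.+4.+1)%:R - 32 * p ^+ 3 + 2 * p * (k.+4.+1)%:R - 8 * p) (- 4 * p ^+ 3 - p)
      (E1 k.+4) (E1 k.+3) (E1 k.+2) (E1 k.+1) (E1 k) (E2 k.+3) (E2 k.+2) (E2 k.+1) (E2 k)).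
    rewrite /Dn; ring.


have N0 : (k.+4.+1)%:R != 0 :> R[i] by rewrite pnatr_eq0.
have N1 : (k.+4.+1)%:R + 1 != 0 :> R[i].
  by have := natS_neq0 (F:=R[i]) k.+4.+1; rewrite -addn1 natrD.
have cN : c + (k.+4.+1)%:R != 0 by exact: cnz.
have cN1 : c + (k.+4.+1)%:R - 1 != 0.
  by have := cnz k.+4; rewrite (_ : c + (k.+4.+1)%:R - 1 = c + k.+4%:R) //; ring.
have DnZ : Dn c k.+4.+1 != 0.
  by rewrite /Dn !mulf_neq0.
apply: (mulfI DnZ); rewrite key.
rewrite /beta0 /beta1 /beta2 /beta3 /beta4 /beta5 /Dn /=.
field.
have e5 : (k.+4.+1)%:R = 5 + k%:R :> R[i] by ring.
by rewrite -!e5 cN cN1 N1 N0 c0 c2'.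
Qed.
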